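(* Let $q\ge2$ be even and let $A(n,m)$ denote the number of $m$-RCD roots in $\Sigma_q^n$. If $m\ge\lceil\log_q n\rceil+1$, then $A(n,m)\ge (q-1)q^{n-1}$.
   Context: $\Sigma_q=\{0,\dots,q-1\}$, $\boldsymbol{x}_{[a,b]}=x_a\cdots x_b$. A complement operation is a fixed bijection $a\mapsto\overline{a}$ on $\Sigma_q$ with $\overline{a}\ne a$, $\overline{\overline{a}}=a$; $\boldsymbol{x}^{RC}=\overline{x_n}\cdots\overline{x_1}$ for $\boldsymbol{x}=x_1\cdots x_n$. For an integer $m\ge2$, a string $\boldsymbol{x}\in\Sigma_q^n$ is an $m$-RCD root if $\boldsymbol{x}_{[i+m,i+2m-1]}\ne\boldsymbol{x}_{[i,i+m-1]}^{RC}$ for every $i\in[1,n-2m+1]$. *)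

(* Defs.v *)
From mathcomp Require Import all_boot.
Set Implicit Arguments. Unset Strict Implicit. Unset Printing Implicit Defensive.

(* Alphabet Sigma_q = 'I_q ; strings of length n = n.-tuple 'I_q. *)

Definition complement_op (q : nat) (c : 'I_q -> 'I_q) : Prop :=
  (forall a, c a != a) /\ involutive c.

Definition revcomp (q : nat) (c : 'I_q -> 'I_q) (s : seq 'I_q) : seq 'I_q :=
  rev (map c s).

Definition substr (T : Type) (s : seq T) (i len : nat) : seq T :=
  take len (drop i s).

(* m-RCD root: for every 0-based i with i + 2m <= n (i.e. 1-based i in
   [1, n-2m+1]), x_[i+m, i+2m-1] <> (x_[i, i+m-1])^RC. *)
Definition rcd_root (q : nat) (c : 'I_q -> 'I_q) (m : nat) (x : seq 'I_q) : bool :=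
  [forall i : 'I_(size x).+1, (i + 2 * m <= size x) ==>
     (substr x (i + m) m != revcomp c (substr x i m))].

Definition A_count (q : nat) (c : 'I_q -> 'I_q) (n m : nat) : nat :=
  #|[set x : n.-tuple 'I_q | rcd_root c m x]|.

(* Main.v *)
Require Import Defs.
From mathcomp Require Import all_boot.
From mathcomp Require Import zify.

Lemma card_bigcup_le (I T : finType) (P : pred I) (F : I -> {set T}) :
  #|\bigcup_(i | P i) F i| <= \sum_(i | P i) #|F i|.
Proof.
elim/big_rec2: _ => [|i k U _ h]; first by rewrite cards0.
apply: leq_trans (leq_card_setU (F i) U) _; exact: leq_add.
Qed.

Section Bad.
Variables (q : nat) (c : 'I_q -> 'I_q) (n m i : nat) (d : 'I_q).
Hypothesis him : i + 2 * m <= n.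

Definition badset : {set n.-tuple 'I_q} :=
  [set x : n.-tuple 'I_q | substr x (i + m) m == revcomp c (substr x i m)].

Definition squeeze (x : n.-tuple 'I_q) : (n - m).-tuple 'I_q :=
  [tuple nth d (take (i + m) x ++ drop (i + 2 * m) x) j | j < n - m].

Lemma squeeze_size (x : n.-tuple 'I_q) :
  size (take (i + m) x ++ drop (i + 2 * m) x) = n - m.
Proof. rewrite size_cat size_take size_drop size_tuple; case: ifP; lia. Qed.

Lemma card_badset : #|badset| <= q ^ (n - m).
Proof.
rewrite -(card_in_imset (f := squeeze)).
  by apply: leq_trans (max_card _) _; rewrite card_tuple card_ord.
move=> x y; rewrite !inE => /eqP hx /eqP hy /(congr1 val) /= e.
have es : take (i + m) x ++ drop (i + 2 * m) x = take (i + m) y ++ drop (i + 2 * m) y.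
  apply: (@eq_from_nth _ d); first by rewrite !squeeze_size.
  move=> j; rewrite squeeze_size => hj.
  have := congr1 (fun s => nth d s j) e.
  rewrite !(nth_map (Ordinal hj)) ?size_enum_ord //.
  have E : nat_of_ord (nth (Ordinal hj) (enum 'I_(n - m)) j) = j := nth_enum_ord _ hj.
  rewrite (_ : @nat_of_ord (n-m) (nth (Ordinal hj) (Finite.enum.body _) j) = j).
  - by [].
  - by rewrite -enumT; exact: E.
  by rewrite -enumT size_enum_ord.
have sx : size (take (i + m) x) = i + m by rewrite size_take size_tuple; case: ifP; lia.
have sy : size (take (i + m) y) = i + m by rewrite size_take size_tuple; case: ifP; lia.
have et : take (i + m) x = take (i + m) y.
  by have := congr1 (take (i + m)) es; rewrite !take_size_cat.
have ed : drop (i + 2 * m) x = drop (i + 2 * m) y.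
  by have := congr1 (drop (i + m)) es; rewrite !drop_size_cat.
have em : substr x i m = substr y i m.
  by rewrite /substr !take_drop addnC et.
apply: val_inj => /=.
rewrite -(cat_take_drop (i + m) x) -(cat_take_drop (i + m) y) et; congr (_ ++ _).
rewrite -(cat_take_drop m (drop (i + m) x)) -(cat_take_drop m (drop (i + m) y)).
have -> : take m (drop (i + m) x) = take m (drop (i + m) y).
  by change (substr x (i + m) m = substr y (i + m) m); rewrite hx hy em.
by rewrite !drop_drop (_ : m + (i + m) = i + 2 * m) ?ed //; lia.
Qed.
End Bad.

Theorem lemma3 (q : nat) (c : 'I_q -> 'I_q) (n m : nat) :
  2 <= q -> ~~ odd q -> complement_op c -> 2 <= m -> 1 <= n ->
  up_log q n + 1 <= m ->
  (q - 1) * q ^ (n - 1) <= A_count c n m.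
Proof.
move=> hq _ _ hm hn hup.
have d : 'I_q by exists 0; lia.
set Q := q ^ (n - 1).
have eqn : q ^ n = q * Q by rewrite /Q -expnS; congr (_ ^ _); lia.
rewrite /A_count.
set G := [set x : n.-tuple 'I_q | rcd_root c m x].
set P := [pred i : 'I_n.+1 | i + 2 * m <= n].
have sub : ~: G \subset \bigcup_(i | P i) badset q c n m i.
  apply/subsetP => x; rewrite !inE /rcd_root negb_forall => /existsP[i].
  rewrite negb_imply negbK => /andP[hi he]; apply/bigcupP; exists (cast_ord (congr1 S (size_tuple x)) i).
    by rewrite inE /=; move: hi; rewrite [in X in _ <= X]size_tuple.
  by rewrite inE /=.
have hbad : #|~: G| <= #|P| * q ^ (n - m).
  apply: leq_trans (subset_leq_card sub) _.
  apply: leq_trans (card_bigcup_le _ _ _ _) _.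
  rewrite -sum_nat_const; apply: leq_sum => i hi.
  exact: (@card_badset q c n m i d hi).
have hP : #|P| * q ^ (n - m) <= Q.
  case: (ltnP n (2 * m)) => h.
    have -> : #|P| = 0.
      apply: eq_card0 => i.
      rewrite !inE; apply/negbTE; have := ltn_ord i; lia.
    by [].
  have hPn : #|P| <= n.
    have hs : P \subset predC1 (@ord_max n).
      apply/subsetP => i; rewrite !inE => hi; apply/eqP => ei.
      by move: hi; rewrite ei /=; lia.
    apply: leq_trans (subset_leq_card hs) _.
    by rewrite cardC1 card_ord.
  have hnq : n <= q ^ (m - 1).
    apply: leq_trans (up_logP n hq) _; rewrite leq_exp2l //; lia.
  rewrite /Q (_ : n - 1 = (m - 1) + (n - m)); last by lia.
  rewrite expnD leq_mul2r; apply/orP; right; exact: leq_trans hPn hnq.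
have hc : #|G| + #|~: G| = q ^ n by rewrite cardsC card_tuple card_ord.
rewrite mulnBl mul1n -eqn; lia.
Qed.
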